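(* Let $G$ and $H$ be Left dead-ends. Then $G\geq H$ if and only if $o(G^\circ+H)\leq\mathscr{P}$.
   Context: Games are finite partizan games; $\cong$ is identity of game trees; $o(G)$ is the misère outcome class (ordered $\mathscr{L}>\mathscr{N}>\mathscr{R}$, $\mathscr{L}>\mathscr{P}>\mathscr{R}$, with $\mathscr{N},\mathscr{P}$ incomparable). A universe is a set of games closed under options, disjunctive sums, conjugates, and forming $\{\mathscr{G}^L\mid\mathscr{G}^R\}$ from nonempty finite subsets of it; $G\geq_\mathcal{U}H$ means $o(G+X)\geq o(H+X)$ for all $X\in\mathcal{U}$. A Left dead-end is a game all of whose subpositions have no Left option. For Left dead-ends, $G\geq H$ means $G\geq_\mathcal{U}H$ for every universe $\mathcal{U}$. For a Left dead-end $G$, the adjoint is $G^\circ=*=\{0\mid0\}$ if $G\cong0$ and $G^\circ=\{(G^R)^\circ\mid 0\}$ otherwise, with $G^R$ ranging over the Right options of $G$. *)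

(* Defs.v *)
From Stdlib Require Import List Bool.
Import ListNotations.

(* A game {G^L | G^R}: lists of Left options and Right options.
   Game-tree identity (≅) is syntactic equality of these trees
   (order/multiplicity of options is irrelevant for everything below). *)
Inductive game : Type := Game : list game -> list game -> game.

Definition leftOpts (G : game) : list game := match G with Game l _ => l end.
Definition rightOpts (G : game) : list game := match G with Game _ r => r end.

Definition zero : game := Game [] [].
Definition star : game := Game [zero] [zero].

(* Disjunctive sum G + H = {G^L+H, G+H^L | G^R+H, G+H^R}. *)
Fixpoint add (G H : game) {struct G} : game :=
  match G with
  | Game gl gr =>
    (fix addH (H : game) : game :=
       match H with
       | Game hl hr =>
         Game (map (fun x => add x H) gl ++ map addH hl)
              (map (fun x => add x H) gr ++ map addH hr)
       end) H
  end.

Fixpoint conjg (G : game) : game :=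
  match G with Game l r => Game (map conjg r) (map conjg l) end.

(* Misère play: a player with no move available WINS.
   leftWins G = (Left wins G playing first, Left wins G playing second). *)
Fixpoint leftWins (G : game) : bool * bool :=
  match G with
  | Game l r =>
    (match l with [] => true | _ => existsb (fun x => snd (leftWins x)) l end,
     match r with [] => false | _ => forallb (fun x => fst (leftWins x)) r end)
  end.

(* Misère outcome classes.  (Finite games are determined, so Right wins
   playing first iff Left does not win playing second.) *)
Inductive outcome : Type := oL | oN | oP | oR.

Definition o (G : game) : outcome :=
  match leftWins G with
  | (true, true) => oL
  | (true, false) => oN
  | (false, true) => oP
  | (false, false) => oR
  end.

Definition outcome_le (a b : outcome) : Prop :=
  match a, b with
  | oR, _ => True
  | oN, (oN | oL) => True
  | oP, (oP | oL) => True
  | oL, oL => True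
  | _, _ => False
  end.

Definition universe (U : game -> Prop) : Prop :=
  (forall G x, U G -> In x (leftOpts G) -> U x) /\
  (forall G x, U G -> In x (rightOpts G) -> U x) /\
  (forall G H, U G -> U H -> U (add G H)) /\
  (forall G, U G -> U (conjg G)) /\
  (forall A B : list game, A <> [] -> B <> [] ->
     (forall x, In x A -> U x) -> (forall x, In x B -> U x) -> U (Game A B)).

Definition geU (U : game -> Prop) (G H : game) : Prop :=
  forall X, U X -> outcome_le (o (add H X)) (o (add G X)).

Definition ge (G H : game) : Prop :=
  forall U, universe U -> geU U G H.

Inductive subpos : game -> game -> Prop :=
  | subpos_refl G : subpos G G
  | subpos_left G x S : In x (leftOpts G) -> subpos S x -> subpos S G
  | subpos_right G x S : In x (rightOpts G) -> subpos S x -> subpos S G.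

Definition left_dead_end (G : game) : Prop :=
  forall S, subpos S G -> leftOpts S = [].

Fixpoint adjoint (G : game) : game :=
  match G with
  | Game [] [] => star
  | Game _ r => Game (map adjoint r) [zero]
  end.

(* Main.v *)
Require Import Defs.
From Stdlib Require Import List.
From Stdlib Require Import Lia Classical Wf_nat Bool.
Import ListNotations.

Fixpoint gsize (g : game) : nat :=
  match g with Game l r => S (list_sum (map gsize l) + list_sum (map gsize r)) end.

Lemma in_size x l : In x l -> gsize x <= list_sum (map gsize l).
Proof. induction l; simpl; [tauto|]. intros [->|H]; [lia|]. specialize (IHl H); lia. Qed.

Lemma size_l x G : In x (leftOpts G) -> gsize x < gsize G.
Proof. destruct G as [l r]; simpl; intros H; apply in_size in H; lia. Qed.
Lemma size_r x G : In x (rightOpts G) -> gsize x < gsize G.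
Proof. destruct G as [l r]; simpl; intros H; apply in_size in H; lia. Qed.

Lemma size_ind (P : game -> Prop) :
  (forall G, (forall x, gsize x < gsize G -> P x) -> P G) -> forall G, P G.
Proof. intros IH G. apply (well_founded_induction (well_founded_ltof game gsize)). exact IH. Qed.

Lemma size2_ind (P : game -> game -> Prop) :
  (forall A B, (forall A' B', gsize A' + gsize B' < gsize A + gsize B -> P A' B') -> P A B) ->
  forall A B, P A B.
Proof.
  intros IH A B.
  set (Q := fun p : game * game => P (fst p) (snd p)).
  change (Q (A, B)).
  apply (well_founded_induction (well_founded_ltof _ (fun p => gsize (fst p) + gsize (snd p)))).
  intros [a b] H. unfold Q; simpl. apply IH. intros A' B' Hlt.
  apply (H (A', B')). unfold ltof; simpl; lia.
Qed.

Lemma leftOpts_add G H : leftOpts (add G H) =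
  map (fun x => add x H) (leftOpts G) ++ map (add G) (leftOpts H).
Proof. destruct G, H; reflexivity. Qed.
Lemma rightOpts_add G H : rightOpts (add G H) =
  map (fun x => add x H) (rightOpts G) ++ map (add G) (rightOpts H).
Proof. destruct G, H; reflexivity. Qed.

Lemma W1_iff G : fst (leftWins G) = true <->
  leftOpts G = [] \/ exists x, In x (leftOpts G) /\ snd (leftWins x) = true.
Proof.
  destruct G as [l r]; simpl. destruct l as [|a l].
  - tauto.
  - rewrite existsb_exists. split; [intros H; right; exact H|].
    intros [H|H]; [discriminate|exact H].
Qed.

Lemma W2_iff G : snd (leftWins G) = true <->
  rightOpts G <> [] /\ forall x, In x (rightOpts G) -> fst (leftWins x) = true.
Proof.
  destruct G as [l r]; simpl. destruct r as [|a r].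
  - split; [discriminate|]. intros [H _]; congruence.
  - rewrite forallb_forall. split; [intros H; split; [discriminate|exact H]|].
    intros [_ H]; exact H.
Qed.

Lemma W1_add A B : fst (leftWins (add A B)) = true <->
  (leftOpts A = [] /\ leftOpts B = []) \/
  (exists a, In a (leftOpts A) /\ snd (leftWins (add a B)) = true) \/
  (exists b, In b (leftOpts B) /\ snd (leftWins (add A b)) = true).
Proof.
  rewrite W1_iff, leftOpts_add. split.
  - intros [H|[x [Hx Hw]]].
    + apply app_eq_nil in H. destruct H as [H1 H2].
      apply map_eq_nil in H1, H2. left; auto.
    + apply in_app_iff in Hx. destruct Hx as [Hx|Hx]; apply in_map_iff in Hx;
      destruct Hx as [y [<- Hy]]; right; [left|right]; eauto.
  - intros [[H1 H2]|[[a [Ha Hw]]|[b [Hb Hw]]]].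
    + left. rewrite H1, H2. reflexivity.
    + right. exists (add a B). split; auto. apply in_app_iff; left.
      apply in_map_iff; eauto.
    + right. exists (add A b). split; auto. apply in_app_iff; right.
      apply in_map_iff; eauto.
Qed.

Lemma W2_add A B : snd (leftWins (add A B)) = true <->
  (rightOpts A <> [] \/ rightOpts B <> []) /\
  (forall a, In a (rightOpts A) -> fst (leftWins (add a B)) = true) /\
  (forall b, In b (rightOpts B) -> fst (leftWins (add A b)) = true).
Proof.
  rewrite W2_iff, rightOpts_add. split.
  - intros [Hne H]. split; [|split].
    + destruct (rightOpts A); [|left; discriminate].
      destruct (rightOpts B); [contradiction|right; discriminate].
    + intros a Ha. apply H, in_app_iff; left; apply in_map_iff; eauto.
    + intros b Hb. apply H, in_app_iff; right; apply in_map_iff; eauto.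
  - intros [Hne [H1 H2]]. split.
    + intros E. apply app_eq_nil in E. destruct E as [E1 E2].
      apply map_eq_nil in E1, E2. tauto.
    + intros x Hx. apply in_app_iff in Hx. destruct Hx as [Hx|Hx]; apply in_map_iff in Hx;
      destruct Hx as [y [<- Hy]]; auto.
Qed.

Lemma pair_eq (p q : bool * bool) : fst p = fst q -> snd p = snd q -> p = q.
Proof. destruct p, q; simpl; congruence. Qed.

Lemma comm A B : leftWins (add A B) = leftWins (add B A).
Proof.
  revert A B. apply size2_ind. intros A B IH.
  assert (IHl : forall a, In a (leftOpts A) \/ In a (rightOpts A) ->
            leftWins (add a B) = leftWins (add B a)).
  { intros a Ha. apply IH. destruct Ha as [Ha|Ha];
    [apply size_l in Ha|apply size_r in Ha]; lia. }
  assert (IHr : forall b, In b (leftOpts B) \/ In b (rightOpts B) ->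
            leftWins (add A b) = leftWins (add b A)).
  { intros b Hb. apply IH. destruct Hb as [Hb|Hb];
    [apply size_l in Hb|apply size_r in Hb]; lia. }
  apply pair_eq; apply eq_true_iff_eq.
  - rewrite !W1_add. split.
    + intros [[H1 H2]|[[a [Ha Hw]]|[b [Hb Hw]]]].
      * left; auto.
      * right; right. exists a. rewrite <- IHl; auto.
      * right; left. exists b. rewrite <- IHr; auto.
    + intros [[H1 H2]|[[a [Ha Hw]]|[b [Hb Hw]]]].
      * left; auto.
      * right; right. exists a. rewrite IHr; auto.
      * right; left. exists b. rewrite IHl; auto.
  - rewrite !W2_add. split.
    + intros [Hne [H1 H2]]. split; [tauto|split].
      * intros b Hb. rewrite <- IHr; auto.
      * intros a Ha. rewrite <- IHl; auto.
    + intros [Hne [H1 H2]]. split; [tauto|split].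
      * intros a Ha. rewrite IHl; auto.
      * intros b Hb. rewrite IHr; auto.
Qed.

Lemma dead_left G : left_dead_end G -> leftOpts G = [].
Proof. intros H; apply H, subpos_refl. Qed.
Lemma dead_right G x : left_dead_end G -> In x (rightOpts G) -> left_dead_end x.
Proof. unfold left_dead_end; intros H Hx S HS. apply H. eapply subpos_right; eauto. Qed.
Lemma dead_zero G : left_dead_end G -> rightOpts G = [] -> G = zero.
Proof. intros H Hr. apply dead_left in H. destruct G; simpl in *; subst; reflexivity. Qed.

Inductive Cr : game -> game -> Prop :=
| Cr0 : Cr zero zero
| CrS : forall l r H, r <> [] ->
    (forall g, In g r -> exists h, In h (rightOpts H) /\ Cr g h) -> Cr (Game l r) H.

Lemma Cr_zero H : Cr zero H -> H = zero.
Proof. intros C; inversion C; subst; auto. congruence. Qed.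
Lemma Cr_r G H g : Cr G H -> In g (rightOpts G) -> exists h, In h (rightOpts H) /\ Cr g h.
Proof. intros C; destruct C; simpl; [tauto|]. auto. Qed.

Lemma Cr_refl : forall G, left_dead_end G -> Cr G G.
Proof.
  apply (size_ind (fun G => left_dead_end G -> Cr G G)); intros G IH HG.
  destruct (rightOpts G) as [|g r] eqn:E.
  - rewrite (dead_zero G HG E). constructor.
  - destruct G as [l r0]. simpl in E. subst r0.
    constructor; [discriminate|]. intros g' Hg. exists g'. split; auto.
    apply IH.
    + apply (size_r g' (Game l (g :: r))). exact Hg.
    + eapply dead_right; [exact HG|exact Hg].
Qed.

Lemma W1_zero_dead b : left_dead_end b -> fst (leftWins (add zero b)) = true.
Proof. intros Hb. apply W1_add. left. split; [reflexivity|apply dead_left; auto]. Qed.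

Lemma adj_key : forall G, left_dead_end G -> forall H, left_dead_end H ->
  (fst (leftWins (add (adjoint G) H)) = false <-> Cr G H).
Proof.
  apply (size_ind (fun G => left_dead_end G -> forall H, left_dead_end H ->
  (fst (leftWins (add (adjoint G) H)) = false <-> Cr G H))); intros G IH HG H HH.
  pose proof (dead_left _ HG) as HGl.
  pose proof (dead_left _ HH) as HHl.
  destruct G as [l r]; simpl in HGl; subst l.
  destruct r as [|g r].
  - change (adjoint (Game [] [])) with star. rewrite <- not_true_iff_false, W1_add. split.
    + intros Hn. destruct (rightOpts H) as [|h hs] eqn:Er.
      * rewrite (dead_zero H HH Er). constructor.
      * exfalso. apply Hn. right; left. exists zero. split; [simpl; auto|].
        apply W2_add. split; [right; congruence|split].
        -- simpl; tauto.
        -- intros b Hb. apply W1_zero_dead. apply (dead_right H); assumption.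
    + intros C. apply Cr_zero in C. subst H.
      intros [[H1 _]|[[a [Ha Hw]]|[b [Hb _]]]].
      * discriminate.
      * simpl in Ha. destruct Ha as [<-|[]]. apply W2_add in Hw.
        destruct Hw as [[Hn|Hn] _]; apply Hn; reflexivity.
      * simpl in Hb; tauto.
  - change (adjoint (Game [] (g :: r))) with (Game (map adjoint (g :: r)) [zero]).
    rewrite <- not_true_iff_false, W1_add. simpl leftOpts. rewrite HHl.
    assert (Key : forall g', In g' (g :: r) ->
      (snd (leftWins (add (adjoint g') H)) = true <->
       ~ exists h, In h (rightOpts H) /\ Cr g' h)).
    { intros g' Hg'. assert (Dg : left_dead_end g') by (eapply dead_right; [exact HG|exact Hg']).
      assert (Sg : gsize g' < gsize (Game [] (g :: r))) by (apply size_r; exact Hg').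
      rewrite W2_add. split.
      - intros [_ [_ Hb]] [h [Hh C]].
        assert (Dh : left_dead_end h) by (apply (dead_right H); assumption).
        apply (IH g' Sg Dg h Dh) in C. rewrite Hb in C; [discriminate|exact Hh].
      - intros Hn. split; [left; destruct g' as [[|] [|]]; discriminate|split].
        + intros a Ha. replace (rightOpts (adjoint g')) with [zero] in Ha
            by (destruct g' as [[|] [|]]; reflexivity).
          destruct Ha as [<-|[]]. apply W1_zero_dead; auto.
        + intros b Hb. apply not_false_iff_true. intros E.
          apply Hn. exists b. split; auto.
          apply (IH g' Sg Dg b); [apply (dead_right H); assumption|exact E]. }
    split.
    + intros Hn. constructor; [discriminate|]. intros g' Hg'.
      apply NNPP. intros Hne. apply Hn. right; left. exists (adjoint g').
      split; [apply (in_map adjoint (g :: r)); exact Hg'|]. apply Key; auto.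
    + intros C [[H1 _]|[[a [Ha Hw]]|[b [Hb _]]]].
      * discriminate.
      * apply (in_map_iff adjoint (g :: r)) in Ha. destruct Ha as [g' [<- Hg']].
        apply (Key g' Hg') in Hw. apply Hw. eapply Cr_r; [exact C|exact Hg'].
      * simpl in Hb; tauto.
Qed.

Lemma key : forall G X H, left_dead_end G -> left_dead_end H -> Cr G H ->
  (fst (leftWins (add H X)) = true -> fst (leftWins (add G X)) = true) /\
  (snd (leftWins (add H X)) = true -> snd (leftWins (add G X)) = true).
Proof.
  apply (size2_ind (fun G X => forall H, left_dead_end G -> left_dead_end H -> Cr G H ->
  (fst (leftWins (add H X)) = true -> fst (leftWins (add G X)) = true) /\
  (snd (leftWins (add H X)) = true -> snd (leftWins (add G X)) = true))).
  intros G X IH H HG HH C.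
  pose proof (dead_left _ HG) as HGl.
  pose proof (dead_left _ HH) as HHl.
  split.
  - rewrite !W1_add, HGl, HHl. intros [[_ H2]|[[a [Ha _]]|[b [Hb Hw]]]].
    + left; auto.
    + destruct Ha.
    + right; right. exists b. split; auto.
      refine (proj2 (IH G b _ H HG HH C) Hw). apply size_l in Hb; lia.
  - rewrite !W2_add. intros [Hne [H1 H2]]. split; [|split].
    + destruct (rightOpts X) eqn:EX; [|right; discriminate].
      destruct (rightOpts G) eqn:EG; [|left; discriminate].
      exfalso. apply dead_zero in EG; auto. subst G. apply Cr_zero in C. subst H.
      simpl in Hne; tauto.
    + intros g' Hg'. destruct (Cr_r _ _ _ C Hg') as [h [Hh C']].
      refine (proj1 (IH g' X _ h _ _ C') (H1 h Hh)).
      * apply size_r in Hg'; lia.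
      * apply (dead_right G); assumption.
      * apply (dead_right H); assumption.
    + intros b Hb. refine (proj1 (IH G b _ H HG HH C) (H2 b Hb)). apply size_r in Hb; lia.
Qed.

Lemma ole_iff A B : outcome_le (o A) (o B) <->
  ((fst (leftWins A) = true -> fst (leftWins B) = true) /\
   (snd (leftWins A) = true -> snd (leftWins B) = true)).
Proof.
  unfold o. destruct (leftWins A) as [[|] [|]], (leftWins B) as [[|] [|]]; simpl;
  intuition discriminate.
Qed.

Lemma ole_P A : outcome_le (o A) oP <-> fst (leftWins A) = false.
Proof. unfold o. destruct (leftWins A) as [[|] [|]]; simpl; intuition discriminate. Qed.

Lemma univ_all : universe (fun _ => True).
Proof. unfold universe; repeat split; intros; exact I. Qed.

Theorem mainTheorem16 (G H : game) :
  left_dead_end G -> left_dead_end H ->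
  (ge G H <-> outcome_le (o (add (adjoint G) H)) oP).
Proof.
  intros HG HH. rewrite ole_P. split.
  - intros Hge. pose proof (Hge _ univ_all (adjoint G) I) as h.
    apply ole_iff in h. destruct h as [h _].
    assert (E : fst (leftWins (add G (adjoint G))) = false).
    { rewrite comm. apply adj_key; auto. apply Cr_refl; auto. }
    rewrite comm. apply not_true_iff_false. intros T. rewrite (h T) in E. discriminate.
  - intros E U _ X _. apply ole_iff. apply key; auto. apply adj_key; auto.
Qed.
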